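(* Let $U$ be a linear subspace of $L_2(\mathcal{X},\mathcal{Y},\mu)$ that is closed under $\mathcal{Q}$, i.e. $\mathcal{Q}U\subset U$. Define $S=\{f\in U: f \text{ is } \mathcal{G}\text{-equivariant}\}$ and $A=\{f\in U:\mathcal{Q}f=0\}$. Then $U$ admits the orthogonal decomposition $U=S\oplus A$, orthogonality being with respect to $\langle\cdot,\cdot\rangle_\mu$.
   Context: $\mathcal{G}$ is a compact, second countable, Hausdorff topological group with its Borel $\sigma$-algebra and Haar probability measure $\lambda$ ($\lambda(\mathcal{G})=1$). $\mathcal{X}$ is a nonempty Polish space with its Borel $\sigma$-algebra, on which $\mathcal{G}$ acts measurably, $(g,x)\mapsto gx$. $\mathcal{Y}=\mathbb{R}^k$ with an inner product $\langle\cdot,\cdot\rangle$ and induced norm $\|\cdot\|$, on which $\mathcal{G}$ acts by a measurable linear representation $\psi$ that is unitary: $\langle\psi(g)a,\psi(g)b\rangle=\langle a,b\rangle$ for all $a,b,g$; write $gy=\psi(g)y$. $\mu$ is a $\mathcal{G}$-invariant Borel probability measure on $\mathcal{X}$ (if $X\sim\mu$ then $gX\sim\mu$ for all $g$). $L_2(\mathcal{X},\mathcal{Y},\mu)$ is the Hilbert space of $\mu$-a.e. equivalence classes of measurable $f:\mathcal{X}\to\mathcal{Y}$ with $\|f\|_\mu^2=\int\|f(x)\|^2d\mu(x)<\infty$, inner product $\langle f,h\rangle_\mu=\int_\mathcal{X}\langle f(x),h(x)\rangle d\mu(x)$. A function $f$ is $\mathcal{G}$-equivariant if $f(gx)=\psi(g)f(x)$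 for all $g\in\mathcal{G},x\in\mathcal{X}$. The averaging operator is $\mathcal{Q}f(x)=\int_\mathcal{G}\psi(g^{-1})f(gx)\,d\lambda(g)$. *)

(* Defs.v *)
From HB Require Import structures.
From mathcomp Require Import all_boot all_order all_algebra.
From mathcomp Require Import all_classical all_reals all_analysis.
Set Implicit Arguments. Unset Strict Implicit. Unset Printing Implicit Defensive.
Import Order.TTheory GRing.Theory Num.Theory.
Import numFieldNormedType.Exports.
Local Open Scope classical_set_scope.
Local Open Scope ring_scope.

Definition borel (T : ptopologicalType) := g_sigma_algebraType (@open T).

Definition topological_group (T : topologicalType)
    (mul : T -> T -> T) (inv : T -> T) (one : T) : Prop :=
  [/\ (forall a b c, mul a (mul b c) = mul (mul a b) c),
      (forall a, mul one a = a /\ mul a one = a),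
      (forall a, mul (inv a) a = one /\ mul a (inv a) = one),
      continuous (fun p : T * T => mul p.1 p.2)
    & continuous inv].

Definition polish_space (R : realType) (X : topologicalType) : Prop :=
  (exists D : set X, countable D /\ closure D = setT) /\
  exists d : X -> X -> R,
    [/\ (forall x y, d x y = 0 <-> x = y),
        (forall x y, d x y = d y x),
        (forall x y z, d x z <= d x y + d y z),
        (forall A : set X, open A <->
           (forall x, A x -> exists2 e : R, 0 < e & [set y | d x y < e] `<=` A))
      & (forall u : nat -> X,
           (forall e : R, 0 < e -> exists N, forall m n, (N <= m)%N -> (N <= n)%N ->
              d (u m) (u n) < e) ->
           exists l, (fun n => d (u n) l : R) @ \oo --> (0 : R))].

(* Haar probability measure on the compact group: a probability measure on the
   Borel sets which is invariant under left and right translations and under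
   inversion (the latter two are automatic for Haar measure on a compact group). *)
Definition haar_probability (R : realType) (G : ptopologicalType)
    (mul : G -> G -> G) (inv : G -> G) (lam : probability (borel G) R) : Prop :=
  forall A : set (borel G), measurable A ->
    [/\ (forall g : G, lam ((fun h : borel G => mul g h) @^-1` A) = lam A),
        (forall g : G, lam ((fun h : borel G => mul h g) @^-1` A) = lam A)
      & lam ((fun h : borel G => inv h) @^-1` A) = lam A].

Definition inner_product (R : realType) (k : nat)
    (ip : 'cV[R]_k -> 'cV[R]_k -> R) : Prop :=
  [/\ (forall a b, ip a b = ip b a),
      (forall (c : R) a b d, ip (c *: a + b) d = c * ip a d + ip b d)
    & (forall a, a != 0 -> 0 < ip a a)].

Section L2.
Context {d : measure_display} {X : measurableType d} {R : realType} {k : nat}.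

(* measurable function X -> R^k (Borel on R^k = componentwise measurability) *)
Definition vmeasurable (f : X -> 'cV[R]_k) : Prop :=
  forall i : 'I_k, measurable_fun setT (fun x => f x i ord0).

(* f is (a representative of an element) in L_2(X, R^k, mu) *)
Definition inL2 (mu : {measure set X -> \bar R}) (ip : 'cV[R]_k -> 'cV[R]_k -> R)
    (f : X -> 'cV[R]_k) : Prop :=
  vmeasurable f /\ mu.-integrable setT (fun x => (ip (f x) (f x))%:E).

Definition L2inner (mu : {measure set X -> \bar R}) (ip : 'cV[R]_k -> 'cV[R]_k -> R)
    (f h : X -> 'cV[R]_k) : \bar R :=
  (\int[mu]_x (ip (f x) (h x))%:E)%E.

(* U is (the set of all representatives of) a linear subspace of L_2(X,R^k,mu) *)
Definition L2_subspace (mu : {measure set X -> \bar R}) (ip : 'cV[R]_k -> 'cV[R]_k -> R)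
    (U : set (X -> 'cV[R]_k)) : Prop :=
  [/\ (forall f, U f -> inL2 mu ip f),
      (forall f h, U f -> vmeasurable h -> {ae mu, forall x, h x = f x} -> U h),
      U (fun _ => 0),
      (forall f h, U f -> U h -> U (fun x => f x + h x))
    & (forall (c : R) f, U f -> U (fun x => c *: f x))].
End L2.

Definition Qop (R : realType) (k : nat) (G : ptopologicalType) {dX} {X : measurableType dX}
    (inv : G -> G) (act : G -> X -> X) (psi : G -> 'M[R]_k)
    (lam : probability (borel G) R) (f : X -> 'cV[R]_k) : X -> 'cV[R]_k :=
  fun x => \col_(i < k)
    Rintegral lam setT (fun g : borel G => (psi (inv g) *m f (act g x)) i ord0).

Definition equivariant (R : realType) (k : nat) (G X : Type)
    (act : G -> X -> X) (psi : G -> 'M[R]_k) (f : X -> 'cV[R]_k) : Prop :=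
  forall g x, f (act g x) = psi g *m f x.

(* Main.v *)
Require Import Defs.
From HB Require Import structures.
From mathcomp Require Import all_boot all_order all_algebra.
From mathcomp Require Import all_classical all_reals all_analysis.
From mathcomp Require Import lra measurable_realfun.
Set Implicit Arguments. Unset Strict Implicit. Unset Printing Implicit Defensive.
Import Order.TTheory GRing.Theory Num.Theory.
Local Open Scope classical_set_scope.
Local Open Scope ring_scope.
Section IP.
Variables (R : realType) (k : nat) (ip : 'cV[R]_k -> 'cV[R]_k -> R).
Hypothesis Hip : inner_product ip.

Lemma ipC a b : ip a b = ip b a.
Proof. by case: Hip. Qed.

Lemma ip0l b : ip 0 b = 0.
Proof.
case: Hip => _ HL _; have := HL 1 0 0 b; rewrite scale1r addr0 mul1r => h.
lra.
Qed.

Lemma ipDl a c d : ip (a + c) d = ip a d + ip c d.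
Proof. by case: Hip => _ HL _; rewrite -[a]scale1r HL mul1r scale1r. Qed.

Lemma ipZl (c : R) a d : ip (c *: a) d = c * ip a d.
Proof. by case: Hip => _ HL _; rewrite -[c *: a]addr0 HL ip0l addr0. Qed.

Lemma ip0r b : ip b 0 = 0.
Proof. by rewrite ipC ip0l. Qed.
Lemma ipDr a c d : ip d (a + c) = ip d a + ip d c.
Proof. by rewrite ipC ipDl ![ip _ d]ipC. Qed.
Lemma ipZr (c : R) a d : ip d (c *: a) = c * ip d a.
Proof. by rewrite ipC ipZl ipC. Qed.
Lemma ipNl a d : ip (- a) d = - ip a d.
Proof. by rewrite -scaleN1r ipZl mulN1r. Qed.
Lemma ipNr a d : ip d (- a) = - ip d a.
Proof. by rewrite ipC ipNl ipC. Qed.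

Lemma ip_suml (I : Type) (r : seq I) (P : pred I) (F : I -> 'cV[R]_k) d :
  ip (\sum_(i <- r | P i) F i) d = \sum_(i <- r | P i) ip (F i) d.
Proof.
elim/big_rec2: _ => [|i y1 y2 _ <-]; first exact: ip0l.
by rewrite ipDl.
Qed.

Lemma ip_ge0 a : 0 <= ip a a.
Proof.
have [->|a0] := eqVneq a 0; first by rewrite ip0l.
by case: Hip => _ _ /(_ a a0)/ltW.
Qed.

Lemma ip_eq0 a : ip a a = 0 -> a = 0.
Proof.
move=> h; apply/eqP; apply: contraT => a0.
by case: Hip => _ _ /(_ a a0); rewrite h ltxx.
Qed.

Lemma ip_absle a b : 2 * `|ip a b| <= ip a a + ip b b.
Proof.
have h1 := ip_ge0 (a + b); have h2 := ip_ge0 (a - b).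
move: h1 h2; rewrite !ipDl !ipDr !ipNl !ipNr (ipC b a) => h1 h2.
have [h|h] := lerP 0 (ip a b); [rewrite ger0_norm //|rewrite ltr0_norm //]; lra.
Qed.

Definition ev (i : 'I_k) : 'cV[R]_k := delta_mx i ord0.

Lemma col_decomp (a : 'cV[R]_k) : a = \sum_i a i ord0 *: ev i.
Proof.
rewrite {1}(matrix_sum_delta a); apply: eq_bigr => i _.
by rewrite big_ord1.
Qed.

Lemma ipE a b : ip a b = \sum_i a i ord0 * ip (ev i) b.
Proof.
by rewrite {1}(col_decomp a) ip_suml; apply: eq_bigr => i _; rewrite ipZl.
Qed.

Lemma ipE2 a b : ip a b =
  \sum_i \sum_j a i ord0 * b j ord0 * ip (ev i) (ev j).
Proof.
rewrite ipE; apply: eq_bigr => i _; rewrite ipC ipE mulr_sumr.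
by apply: eq_bigr => j _; rewrite ipC; lra.
Qed.

Definition gram : 'M[R]_k := \matrix_(i, j) ip (ev i) (ev j).

Lemma ipM a b : ip a b = \sum_i a i ord0 * (gram *m b) i ord0.
Proof.
rewrite ipE; apply: eq_bigr => i _; congr (_ * _).
rewrite ipC ipE !mxE; apply: eq_bigr => j _; rewrite mxE ipC mulrC //.
Qed.

Lemma gram_tr : gram^T = gram.
Proof. by apply/matrixP => i j; rewrite !mxE ipC. Qed.

Lemma gram_inj (b : 'cV[R]_k) : gram *m b = 0 -> b = 0.
Proof.
move=> h; apply: ip_eq0; rewrite ipM h big1 // => i _; rewrite mxE mulr0 //.
Qed.

Lemma gram_unit : gram \in unitmx.
Proof.
rewrite -row_free_unit -kermx_eq0; apply/eqP/row_matrixP => i.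
rewrite row0; set u := row i _.
have hu : u *m gram = 0 by rewrite /u -row_mul mulmx_ker row0.
have : gram *m u^T = 0 by rewrite -[gram in LHS]gram_tr -trmx_mul hu trmx0.
by move/gram_inj/(congr1 trmx); rewrite trmxK trmx0.
Qed.

Lemma comp_bound : exists c : 'I_k -> R, (forall i, 0 <= c i) /\
  forall (a : 'cV[R]_k) i, `|a i ord0| <= ip a a + c i.
Proof.
exists (fun i => ip (invmx gram *m ev i) (invmx gram *m ev i)); split.
  by move=> i; exact: ip_ge0.
move=> a i.
set v := invmx gram *m ev i.
have hv : ip a v = a i ord0.
  rewrite ipM /v mulmxA mulmxV ?gram_unit // mul1mx.
  rewrite (bigD1 i) //= big1 ?addr0; first by rewrite /ev mxE !eqxx mulr1.
  by move=> j ji; rewrite /ev mxE (negbTE ji) mulr0.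
rewrite -hv; have := ip_absle a v; have := ip_ge0 a; have := ip_ge0 v.
have := normr_ge0 (ip a v); lra.
Qed.

Lemma ip_meas d (T : measurableType d) (D : set T) (f h : T -> 'cV[R]_k) :
  (forall i, measurable_fun D (fun x => f x i ord0)) ->
  (forall i, measurable_fun D (fun x => h x i ord0)) ->
  measurable_fun D (fun x => ip (f x) (h x)).
Proof.
move=> mf mh; under eq_fun do rewrite ipE2.
apply: measurable_sum => i; apply: measurable_sum => j.
by apply: measurable_funM => //; apply: measurable_funM.
Qed.
End IP.
Section Grp.
Variables (T : topologicalType) (mul : T -> T -> T) (inv : T -> T) (one : T).
Hypothesis HG : topological_group mul inv one.

Lemma grp_uniq a b : mul a b = one -> b = inv a.
Proof.
case: HG => HA H1 HI _ _ h.
by rewrite -(H1 b).1 -(HI a).1 -HA h (H1 (inv a)).2.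
Qed.

Lemma grp_invM a b : inv (mul a b) = mul (inv b) (inv a).
Proof.
case: HG => HA H1 HI _ _; apply/esym/grp_uniq.
by rewrite -HA (HA b) (HI b).2 (H1 _).1 (HI a).2.
Qed.

Lemma grp_invK a : inv (inv a) = a.
Proof. by case: HG => HA H1 HI _ _; apply/esym/grp_uniq; rewrite (HI a).1. Qed.
End Grp.

Lemma cont_meas (T U : ptopologicalType) (f : T -> U) : continuous f ->
  measurable_fun setT (f : borel T -> borel U).
Proof.
move=> cf.
have h := @measurability _ _ (borel T) (borel U) setT f (@open U) erefl.
apply: h.
move=> _ [A oA <-]; apply: sub_sigma_algebra; rewrite setTI.
exact: (proj1 (continuousP f) cf).
Qed.

Lemma mulr_cont (G : ptopologicalType) (mul : G -> G -> G) (inv : G -> G) (one : G) :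
  topological_group mul inv one -> forall g0, continuous (fun h => mul h g0).
Proof.
case=> _ _ _ cm _ g0 x.
apply: (@continuous2_cvg _ _ _ _ _ _ id (cst g0) mul x g0).
- exact: (cm (x, g0)).
- exact: cvg_id.
- exact: cvg_cst.
Qed.
Section Lin.
Local Open Scope ereal_scope.
Variables (R : realType) (d : measure_display) (T : measurableType d).
Variable m : {measure set T -> \bar R}.

Lemma int_lin n (c : 'I_n -> R) (F : 'I_n -> T -> R) :
  (forall j, m.-integrable setT (fun t => (F j t)%:E)) ->
  \int[m]_t (\sum_j c j * F j t)%:E =
  (\sum_j c j * Rintegral m setT (F j))%:E.
Proof.
move=> hF.
under eq_integral do rewrite -sumEFin.
rewrite integral_sum //; last first.
  by move=> j; under eq_fun do rewrite EFinM; exact: integrableZl.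
rewrite -sumEFin; apply: eq_bigr => j _.
under eq_integral do rewrite EFinM.
rewrite integralZl // EFinM; congr (_ * _).
by rewrite /Rintegral fineK //; exact: integrable_fin_num.
Qed.

Lemma Rint_lin n (c : 'I_n -> R) (F : 'I_n -> T -> R) :
  (forall j, m.-integrable setT (fun t => (F j t)%:E)) ->
  (Rintegral m setT (fun t => \sum_j c j * F j t) =
  \sum_j c j * Rintegral m setT (F j))%R.
Proof.
by move=> hF; rewrite {1}/Rintegral; have := int_lin c hF; rewrite /= => ->.
Qed.
End Lin.
Section Main.
Local Open Scope ereal_scope.
Variables (R : realType) (G : ptopologicalType) (mul : G -> G -> G) (inv : G -> G) (one : G).
Hypothesis HG : topological_group mul inv one.
Variable lam : probability (borel G) R.
Hypothesis Hlam : haar_probability mul inv lam.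
Variables (X : ptopologicalType) (act : G -> X -> X).
Hypothesis Hact_meas : measurable_fun setT (fun p : (borel G * borel X)%type => (act p.1 p.2 : borel X)).
Hypothesis Hact1 : forall x, act one x = x.
Hypothesis HactM : forall g h x, act (mul g h) x = act g (act h x).
Variables (k : nat) (ip : 'cV[R]_k -> 'cV[R]_k -> R).
Hypothesis Hip : inner_product ip.
Variable psi : G -> 'M[R]_k.
Hypothesis Hpsi_meas : forall i j : 'I_k, measurable_fun setT (fun g : borel G => psi g i j).
Hypothesis Hpsi1 : psi one = 1%:M.
Hypothesis HpsiM : forall g h, psi (mul g h) = psi g *m psi h.
Hypothesis Hpsi_unit : forall g a b, ip (psi g *m a) (psi g *m b) = ip a b.
Variable mu : probability (borel X) R.
Hypothesis Hmu : forall g (B : set (borel X)), measurable B ->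
           mu ((fun x : borel X => act g x) @^-1` B) = mu B.

Local Notation GB := (borel G).
Local Notation XB := (borel X).

Lemma meas_act_g g : measurable_fun setT (act g : XB -> XB).
Proof. by have := @measurable_fun_pair2 _ _ _ GB XB XB _ g Hact_meas. Qed.

Lemma meas_act_x x : measurable_fun setT (fun g : GB => (act g x : XB)).
Proof. by have := @measurable_fun_pair1 _ _ _ GB XB XB _ x Hact_meas. Qed.

Lemma meas_inv : measurable_fun setT (inv : GB -> GB).
Proof. by apply: cont_meas; case: HG. Qed.

Lemma meas_mulr g0 : measurable_fun setT ((fun h => mul h g0) : GB -> GB).
Proof. by apply: cont_meas; apply: mulr_cont HG g0. Qed.

Lemma psi_inv_meas i j : measurable_fun setT (fun g : GB => psi (inv g) i j).
Proof. exact: measurableT_comp (Hpsi_meas i j) meas_inv. Qed.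

Lemma psiV g : psi (inv g) *m psi g = 1%:M.
Proof. by rewrite -HpsiM; case: HG => _ _ /(_ g) [-> _] _ _. Qed.

Lemma psiVr g : psi g *m psi (inv g) = 1%:M.
Proof. by rewrite -HpsiM; case: HG => _ _ /(_ g) [_ ->] _ _. Qed.

Lemma inv_int_gen d (T : measurableType d) (m : {measure set T -> \bar R}) (phi : T -> T)
  (mphi : measurable_fun setT phi)
  (Hm : forall B, measurable B -> m (phi @^-1` B) = m B)
  (f : T -> \bar R) : measurable_fun setT f ->
  \int[m]_x f (phi x) = \int[m]_x f x.
Proof.
move=> mf.
have e : forall h : T -> \bar R, measurable_fun setT h -> (forall x, 0 <= h x) ->
    \int[m]_x h (phi x) = \int[m]_x h x.
  move=> h mh h0.
  have := @ge0_integral_pushforward _ _ T T R phi mphi m setT h measurableT mh (fun y _ => h0 y).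
  rewrite preimage_setT => <-.
  by apply: eq_measure_integral => A mA _ /=; rewrite /pushforward Hm.
rewrite [LHS]integralE [RHS]integralE.
rewrite -/((f \o phi)^\+ ) -/((f \o phi)^\-) funepos_comp funeneg_comp.
by rewrite !e //; [exact: measurable_funeneg|exact: measurable_funepos].
Qed.

Lemma mu_inv_int g (f : XB -> \bar R) : measurable_fun setT f ->
  \int[mu]_x f (act g x) = \int[mu]_x f x.
Proof. by apply: inv_int_gen; [exact: meas_act_g|exact: Hmu]. Qed.

Lemma lam_inv_int g0 (f : GB -> \bar R) : measurable_fun setT f ->
  \int[lam]_h f (mul h g0) = \int[lam]_h f h.
Proof.
apply: inv_int_gen; first exact: meas_mulr.
by move=> B mB; have [_ + _] := Hlam mB; apply.
Qed.


Implicit Types (f : XB -> 'cV[R]_k).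
Definition wv (f : XB -> 'cV[R]_k) (x : X) (g : G) : 'cV[R]_k :=
  psi (inv g) *m f (act g x).

Lemma wv_meas f : vmeasurable f -> forall i,
  measurable_fun setT (fun p : GB * XB => wv f p.2 p.1 i ord0).
Proof.
move=> mf i; rewrite /wv; under eq_fun do rewrite mxE.
apply: measurable_sum => j; apply: measurable_funM.
  exact: measurableT_comp (psi_inv_meas i j) measurable_fst.
exact: measurableT_comp (mf j) Hact_meas.
Qed.

Lemma wv_meas_x f x : vmeasurable f -> forall i,
  measurable_fun setT (fun g : GB => wv f x g i ord0).
Proof.
move=> mf i; have := @measurable_fun_pair1 _ _ _ GB XB _ _ x (wv_meas mf i).
by [].
Qed.

Lemma ip_wv f x g : ip (wv f x g) (wv f x g) = ip (f (act g x)) (f (act g x)).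
Proof. exact: Hpsi_unit. Qed.

Definition Hn (f : XB -> 'cV[R]_k) (x : XB) : \bar R :=
  \int[lam]_g (ip (f (act g x)) (f (act g x)))%:E.

Lemma ipf_meas f : vmeasurable f -> measurable_fun setT (fun x : XB => ip (f x) (f x)).
Proof. by move=> mf; apply: ip_meas. Qed.

Lemma ipf_prod_meas f : vmeasurable f ->
  measurable_fun setT (fun p : GB * XB => (ip (f (act p.1 p.2)) (f (act p.1 p.2)))%:E).
Proof.
move=> mf; apply/measurable_EFinP.
exact: measurableT_comp (ipf_meas mf) Hact_meas.
Qed.

Lemma Hn_meas f : vmeasurable f -> measurable_fun setT (Hn f).
Proof.
move=> mf.
have := @measurable_fun_fubini_tonelli_G _ _ GB XB R lam _ (ipf_prod_meas mf).
apply => p /=; rewrite lee_fin; exact: (ip_ge0 Hip).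
Qed.

Lemma lam_cst (c : \bar R) : \int[lam]_(g in setT) c = c.
Proof. rewrite integral_cst // -[RHS]mule1; congr (_ * _); exact: probability_setT. Qed.

Lemma Hn_int f : vmeasurable f ->
  \int[mu]_x Hn f x = \int[mu]_x (ip (f x) (f x))%:E.
Proof.
move=> mf; rewrite /Hn.
have := @fubini_tonelli _ _ GB XB R lam mu _ (ipf_prod_meas mf).
move=> /(_ (fun p => ip_ge0 Hip _)) /= <-.
transitivity (\int[lam]_g \int[mu]_x (ip (f x) (f x))%:E).
  apply: eq_integral => g _.
  rewrite -(@mu_inv_int g (fun x => (ip (f x) (f x))%:E)) //.
  by apply/measurable_EFinP; exact: (ipf_meas mf).
by rewrite lam_cst.
Qed.

Lemma ipf_int f : inL2 mu ip f -> \int[mu]_x (ip (f x) (f x))%:E < +oo.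
Proof.
move=> [mf /integrableP[_ h]]; move: h.
by under eq_integral do rewrite gee0_abs ?lee_fin ?(ip_ge0 Hip) //.
Qed.

Lemma Hn_ge0 f x : 0 <= Hn f x.
Proof. by apply: integral_ge0 => g _; rewrite lee_fin (ip_ge0 Hip). Qed.

Lemma Hn_integrable f : inL2 mu ip f -> mu.-integrable setT (Hn f).
Proof.
move=> hf; have mf := hf.1.
apply/integrableP; split; first exact: Hn_meas.
under eq_integral do rewrite gee0_abs ?Hn_ge0 //.
by rewrite Hn_int //; exact: ipf_int.
Qed.

Lemma Hn_fin f : inL2 mu ip f -> {ae mu, forall x, Hn f x < +oo}.
Proof.
move=> hf; have := integrable_ae measurableT (Hn_integrable hf).
apply: filterS => x /(_ I) /fin_numPlt /andP[].
by [].
Qed.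

Local Notation Q f := (Qop (X:=XB) inv act psi lam f).

Lemma Hn_inv f g0 x : vmeasurable f -> Hn f (act g0 x) = Hn f x.
Proof.
move=> mf; rewrite /Hn; under eq_integral do rewrite -HactM.
apply: (@lam_inv_int g0 (fun h => (ip (f (act h x)) (f (act h x)))%:E)).
by apply/measurable_EFinP; exact: measurableT_comp (ipf_meas mf) (meas_act_x x).
Qed.

Lemma wv_int f x i : vmeasurable f -> Hn f x < +oo ->
  lam.-integrable setT (fun g => (wv f x g i ord0)%:E).
Proof.
move=> mf hx; have [c [c0 hc]] := comp_bound Hip.
apply/integrableP; split; first by apply/measurable_EFinP; exact: (@wv_meas_x f x mf i).
apply: (@le_lt_trans _ _ (\int[lam]_g ((ip (f (act g x)) (f (act g x)))%:E + (c i)%:E))).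
  apply: ge0_le_integral => //.
  - by apply: measurableT_comp => //; apply/measurable_EFinP; exact: (@wv_meas_x f x mf i).
  - apply: emeasurable_funD; last exact: measurable_cst.
    by apply/measurable_EFinP; exact: measurableT_comp (ipf_meas mf) (meas_act_x x).
  - by move=> g _; rewrite /= lee_fin -ip_wv; exact: hc.
rewrite ge0_integralD //.
- by rewrite lam_cst lte_add_pinfty // ltry.
- by move=> g _; rewrite lee_fin (ip_ge0 Hip).
- by apply/measurable_EFinP; exact: measurableT_comp (ipf_meas mf) (meas_act_x x).
- by move=> g _; rewrite lee_fin.
Qed.

Lemma Q_equi f g0 x : vmeasurable f -> Hn f x < +oo ->
  Q f (act g0 x) = psi g0 *m Q f x.
Proof.
move=> mf hx; apply/matrixP => i j; rewrite (ord1 j) !mxE.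
transitivity (Rintegral lam setT (fun g => (\sum_l psi g0 i l * wv f x g l ord0)%R)).
  rewrite /Rintegral; congr fine.
  rewrite -(@lam_inv_int (inv g0) (fun g => ((psi (inv g) *m f (act g (act g0 x))) i ord0)%:E)); last first.
    by apply/measurable_EFinP; exact: (wv_meas_x (act g0 x) mf).
  apply: eq_integral => g _; congr EFin.
  rewrite (grp_invM HG) (grp_invK HG) HpsiM !HactM -(HactM (inv g0)).
  case: HG => _ H1 HI _ _; rewrite (HI g0).1 Hact1 -mulmxA mxE.
  by apply: eq_bigr => l _.
rewrite Rint_lin; last by move=> l; exact: wv_int.
by apply: eq_bigr => l _; rewrite mxE.
Qed.

Lemma Q_equiv_fix f x : equivariant act psi f -> Q f x = f x.
Proof.
move=> hf; apply/matrixP => i j; rewrite (ord1 j) !mxE.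
under eq_Rintegral do rewrite hf mulmxA psiV mul1mx.
rewrite Rintegral_cst // -[X in _ = X]mulr1; congr (GRing.mul _ _).
rewrite -[RHS]/(fine 1%E); congr fine; exact: probability_setT.
Qed.

Lemma Q_ae u v : vmeasurable u -> vmeasurable v ->
  {ae mu, forall x, u x = v x} -> {ae mu, forall x, Q u x = Q v x}.
Proof.
move=> mu' mv [N [mN N0 sN]].
pose Ind := fun p : GB * XB => ((\1_N (act p.1 p.2) : R)%:E).
have mI : measurable_fun setT Ind.
  apply/measurable_EFinP; apply: (measurableT_comp (f := (\1_N : XB -> R))) => //.
have hI : forall p, 0 <= Ind p by move=> p; rewrite /Ind lee_fin.
have e := @fubini_tonelli _ _ GB XB R lam mu Ind mI hI.
pose J := fun x : XB => \int[lam]_g Ind (g, x).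
have mJ : measurable_fun setT J.
  exact: (@measurable_fun_fubini_tonelli_G _ _ GB XB R lam Ind mI hI).
have J0 : \int[mu]_x J x = 0.
  rewrite /J -e /Ind /=.
  transitivity (\int[lam]_g (0 : \bar R)); last by rewrite integral0.
  apply: eq_integral => g _.
  rewrite (@mu_inv_int g (fun x => (\1_N x : R)%:E)); last first.
    by apply/measurable_EFinP; exact: measurable_indic.
  by rewrite integral_indic // setIT.
have : ae_eq mu setT J (cst 0).
  apply/(ae_eq_integral_abs _ measurableT mJ).
  under eq_integral do rewrite gee0_abs ?integral_ge0 //.
  exact: J0.
apply: filterS => x /(_ I) Jx.
have mA : measurable ((fun g => act g x) @^-1` N : set GB).
  by rewrite -[X in measurable X]setTI; exact: (meas_act_x x measurableT mN).
have lA : lam ((fun g => act g x) @^-1` N : set GB) = 0.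
  rewrite -(setIT ((fun g => act g x) @^-1` N : set GB)) -integral_indic //; rewrite /J /Ind /= in Jx.
apply/matrixP => i j; rewrite !mxE /Rintegral; congr fine.
apply: ae_eq_integral => //.
- by apply/measurable_EFinP; exact: (@wv_meas_x u x mu' i).
- by apply/measurable_EFinP; exact: (@wv_meas_x v x mv i).
exists ((fun g => act g x) @^-1` N); split => // g /= hg.
apply: contrapT => gA; apply: hg => _.
have -> // : u (act g x) = v (act g x).
by apply: contrapT => hne; apply: gA; apply: sN.
Qed.

Lemma ip_abs_le a b : (`|ip a b| <= ip a a + ip b b)%R.
Proof.
have := ip_absle Hip a b; have := ip_ge0 Hip a; have := ip_ge0 Hip b.
have := normr_ge0 (ip a b); lra.
Qed.

Lemma orth s (s' : XB -> 'cV[R]_k) a : inL2 mu ip s -> vmeasurable s' -> equivariant act psi s' ->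
  {ae mu, forall x, s x = s' x} -> inL2 mu ip a ->
  {ae mu, forall x, Q a x = 0%R} -> L2inner mu ip s a = 0.
Proof.
move=> hs ms' es' ss' ha Qa0.
have ms := hs.1; have ma := ha.1.
have -> : L2inner mu ip s a = \int[mu]_x (ip (s' x) (a x))%:E.
  apply: ae_eq_integral => //.
  - by apply/measurable_EFinP; apply: (ip_meas Hip).
  - by apply/measurable_EFinP; apply: (ip_meas Hip).
  by apply: filterS ss' => x ->.
pose F := fun p : GB * XB => (ip (s' p.2) (wv a p.2 p.1))%:E.
have mF : measurable_fun setT F.
  apply/measurable_EFinP; apply: (ip_meas Hip) => i; last exact: wv_meas.
  exact: measurableT_comp (ms' i) measurable_snd.
have ms'2 : measurable_fun setT (fun x : XB => (ip (s' x) (s' x))%:E).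
  by apply/measurable_EFinP; exact: (ipf_meas ms').
have ma2 : forall g, measurable_fun setT (fun x : XB => (ip (a (act g x)) (a (act g x)))%:E).
  by move=> g; apply/measurable_EFinP; exact: measurableT_comp (ipf_meas ma) (meas_act_g g).
have C1 : \int[mu]_x (ip (s' x) (s' x))%:E < +oo.
  have -> : \int[mu]_x (ip (s' x) (s' x))%:E = \int[mu]_x (ip (s x) (s x))%:E.
    apply: ae_eq_integral => //; first by apply/measurable_EFinP; exact: (ipf_meas ms).
    by apply: filterS ss' => x ->.
  exact: ipf_int.
have Fint : (lam \x mu).-integrable setT F.
  apply/(@integrable12ltyP _ _ GB XB R lam mu F mF).
  apply: (@le_lt_trans _ _ (\int[lam]_g (\int[mu]_x (ip (s' x) (s' x))%:E +
                                        \int[mu]_x (ip (a x) (a x))%:E))).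
    apply: ge0_le_integral => //.
    - by move=> g _; exact: integral_ge0.
    - apply: (@measurable_fun_fubini_tonelli_F _ _ GB XB R mu (abse \o F)).
        exact: measurableT_comp.
      by move=> p; exact: abse_ge0.
    - move=> g _; rewrite -(@mu_inv_int g (fun x => (ip (a x) (a x))%:E)); last first.
        by apply/measurable_EFinP; exact: (ipf_meas ma).
      rewrite -ge0_integralD //; last 2 first.
      + by move=> x _; rewrite lee_fin (ip_ge0 Hip).
      + by move=> x _; rewrite lee_fin (ip_ge0 Hip).
      apply: ge0_le_integral => //.
      + by apply: measurableT_comp => //; exact: measurableT_comp mF (measurable_pair1 g).
      + exact: emeasurable_funD.
      + move=> x _; rewrite /F /= lee_fin.
        apply: le_trans (ip_abs_le _ _) _; rewrite ip_wv //.
  rewrite lam_cst lte_add_pinfty //; exact: ipf_int.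
have e1 : forall g, \int[mu]_x F (g, x) = \int[mu]_x (ip (s' x) (a x))%:E.
  move=> g; rewrite -(@mu_inv_int g (fun x => (ip (s' x) (a x))%:E)); last first.
    by apply/measurable_EFinP; apply: (ip_meas Hip).
  apply: eq_integral => x _; rewrite /F /= es' /wv -(Hpsi_unit g) mulmxA psiVr mul1mx //.
have := Fubini Fint.
under eq_integral do rewrite e1.
rewrite lam_cst => ->.
transitivity (\int[mu]_x (0 : \bar R)); last by rewrite integral0.
apply: ae_eq_integral => //.
  exact: (measurable_fubini_G Fint).
have := Hn_fin ha; apply: filterS2 Qa0 => x Qx Hx _.
rewrite /F /=.
under eq_integral do rewrite (ipC Hip) (ipE Hip) /=.
under eq_integral do under eq_bigr do rewrite mulrC.
rewrite int_lin; last by move=> i; exact: wv_int.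
rewrite big1 // => i _.
have := congr1 (fun M : 'cV[R]_k => M i ord0) Qx; rewrite !mxE => ->.
by rewrite mulr0.
Qed.

Lemma ae_zero f : inL2 mu ip f -> L2inner mu ip f f = 0 -> {ae mu, forall x, f x = 0%R}.
Proof.
move=> [mf _] h0.
have mJ : measurable_fun setT (fun x : XB => (ip (f x) (f x))%:E).
  by apply/measurable_EFinP; exact: (ipf_meas mf).
have : ae_eq mu setT (fun x : XB => (ip (f x) (f x))%:E) (cst 0).
  apply/(ae_eq_integral_abs _ measurableT mJ).
  under eq_integral do rewrite gee0_abs ?lee_fin ?(ip_ge0 Hip) //.
  exact: h0.
apply: filterS => x /(_ I) /= [] /(ip_eq0 Hip).
by [].
Qed.

Definition fgood f x := (Hn f x < +oo)%E.

Definition fprime f : XB -> 'cV[R]_k := fun x => if fgood f x then Q f x else 0%R.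

Lemma fprime_equi f : vmeasurable f -> equivariant act psi (fprime f).
Proof.
move=> mf g x; rewrite /fprime /fgood Hn_inv //.
by case: ifP => hx; [exact: Q_equi|rewrite mulmx0].
Qed.

Lemma mE f : vmeasurable f -> measurable [set x : XB | fgood f x].
Proof.
move=> mf; rewrite -[X in measurable X]setTI.
exact: (emeasurable_fun_infty_o measurableT (Hn_meas mf)).
Qed.

Lemma fprime_meas f : inL2 mu ip f -> vmeasurable (fprime f).
Proof.
move=> hf; have mf := hf.1; move=> i.
pose E := [set x : XB | fgood f x].
pose Fi := fun p : GB * XB => (wv f p.2 p.1 i ord0 * \1_E p.2)%R.
have mFi : measurable_fun setT (fun p => (Fi p)%:E).
  apply/measurable_EFinP; apply: measurable_funM; first exact: wv_meas.
  by apply: (measurableT_comp (f := (\1_E : XB -> R))) => //; exact: measurable_indic (mE mf).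
have [c [c0 hc]] := comp_bound Hip.
have iFi : (lam \x mu).-integrable setT (fun p => (Fi p)%:E).
  apply/(@integrable21ltyP _ _ GB XB R lam mu _ mFi).
  apply: (@le_lt_trans _ _ (\int[mu]_x (Hn f x + (c i)%:E))).
    apply: ge0_le_integral => //.
    - by move=> x _; exact: integral_ge0.
    - apply: (@measurable_fun_fubini_tonelli_G _ _ GB XB R lam (abse \o (fun p => (Fi p)%:E))).
        exact: measurableT_comp.
      by move=> p; exact: abse_ge0.
    - by apply: emeasurable_funD => //; exact: Hn_meas.
    - move=> x _; rewrite /Hn -[X in _ <= _ + X]lam_cst -ge0_integralD //; last 3 first.
      + by move=> g _; rewrite lee_fin (ip_ge0 Hip).
      + by apply/measurable_EFinP; exact: measurableT_comp (ipf_meas mf) (meas_act_x x).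
      + by move=> g _; rewrite lee_fin.
      apply: ge0_le_integral => //.
      + apply: measurableT_comp => //.
        exact: (measurableT_comp mFi (measurable_pair2 x)).
      + apply: emeasurable_funD => //.
        by apply/measurable_EFinP; exact: measurableT_comp (ipf_meas mf) (meas_act_x x).
      + move=> g _; rewrite /Fi /= lee_fin normrM.
        apply: (le_trans (y := `|wv f x g i ord0|%R)).
          rewrite -[X in (_ <= X)%R]mulr1 ler_wpM2l //.
          by rewrite /indic; case: (x \in E); rewrite ?normr1 ?normr0.
        by rewrite -ip_wv; exact: hc.
  rewrite ge0_integralD //; last 3 first.
  - by move=> x _; exact: Hn_ge0.
  - exact: Hn_meas.
  - by move=> x _; rewrite lee_fin.
  rewrite integral_cst // lte_add_pinfty //.
    by apply: integrable_lty => //; exact: Hn_integrable.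
  have -> : (c i)%:E * mu setT = (c i)%:E.
    by rewrite -[RHS]mule1; congr (_ * _); exact: probability_setT.
  exact: ltry.
have -> : (fun x => fprime f x i ord0) = fun x => fine (\int[lam]_g (Fi (g, x))%:E).
  apply/funext => x; rewrite /fprime; case: ifP => hx.
    rewrite mxE /Rintegral; congr fine; apply: eq_integral => g _.
    by rewrite /Fi /= indicE mem_set // mulr1.
  rewrite mxE -[LHS]/(fine 0); congr fine.
  rewrite -[LHS](integral0 lam setT); apply: eq_integral => g _.
  rewrite /Fi /= indicE memNset ?mulr0 // /E /= hx //.
apply: measurableT_comp => //.
exact: (measurable_fubini_G iFi).
Qed.

Lemma ae2 (P Q0 R0 : XB -> Prop) : {ae mu, forall x, P x} -> {ae mu, forall x, Q0 x} ->
  (forall x, P x -> Q0 x -> R0 x) -> {ae mu, forall x, R0 x}.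
Proof. by move=> hP hQ hR; apply: (filterS2 _ hR hP hQ). Qed.

Lemma decomp f h : inL2 mu ip f -> inL2 mu ip h ->
  {ae mu, forall x, h x = Q f x} ->
  [/\ {ae mu, forall x, h x = fprime f x} &
      {ae mu, forall x, Q (fun y => (f y + (-1) *: h y)%R) x = 0%R}].
Proof.
move=> hf hh hQ; have mf := hf.1; have mh := hh.1.
have mf' := fprime_meas hf.
have hf' : {ae mu, forall x, h x = fprime f x}.
  apply: (ae2 hQ (Hn_fin hf)) => x -> hx.
  by rewrite /fprime /fgood hx.
split => //.
have hQh := Q_ae mh mf' hf'.
apply: (ae2 (Hn_fin hf) (ae2 hQh (Hn_fin hh) (fun x a b => conj a b))).
move=> x hx [hQx hhx].
have e : Q f x = fprime f x by rewrite /fprime /fgood hx.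
apply/matrixP => i j; rewrite (ord1 j) !mxE.
under eq_Rintegral do rewrite mulmxDr -scalemxAr mxE [X in (_ + X)%R]mxE mulN1r.
rewrite RintegralB //; last 2 first.
- exact: (wv_int i mf hx).
- exact: (wv_int i mh hhx).
have := congr1 (fun M : 'cV[R]_k => M i ord0) hQx.
rewrite (Q_equiv_fix x (fprime_equi mf)).
rewrite -e !mxE => ->; exact: subrr.
Qed.
End Main.

Theorem lemma3p1 (R : realType)
  (* the group G *)
  (G : ptopologicalType) (mul : G -> G -> G) (inv : G -> G) (one : G)
  (HG : topological_group mul inv one)
  (HGc : compact [set: G]) (HGsc : @second_countable G) (HGh : @hausdorff_space G)
  (lam : probability (borel G) R) (Hlam : haar_probability mul inv lam)
  (* the space X *)
  (X : ptopologicalType) (HX : polish_space R X)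
  (act : G -> X -> X)
  (Hact_meas : measurable_fun setT (fun p : (borel G * borel X)%type => (act p.1 p.2 : borel X)))
  (Hact1 : forall x, act one x = x)
  (HactM : forall g h x, act (mul g h) x = act g (act h x))
  (* Y = R^k with an inner product, unitary measurable representation psi *)
  (k : nat) (ip : 'cV[R]_k -> 'cV[R]_k -> R) (Hip : inner_product ip)
  (psi : G -> 'M[R]_k)
  (Hpsi_meas : forall i j : 'I_k, measurable_fun setT (fun g : borel G => psi g i j))
  (Hpsi1 : psi one = 1%:M)
  (HpsiM : forall g h, psi (mul g h) = psi g *m psi h)
  (Hpsi_unit : forall g a b, ip (psi g *m a) (psi g *m b) = ip a b)
  (* G-invariant probability measure mu on X *)
  (mu : probability (borel X) R)
  (Hmu : forall g (B : set (borel X)), measurable B ->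
           mu ((fun x : borel X => act g x) @^-1` B) = mu B)
  (* the subspace U, closed under Q *)
  (U : set (borel X -> 'cV[R]_k)) (HU : L2_subspace mu ip U)
  (HQU : forall f, U f -> exists2 h, U h &
           {ae mu, forall x, h x = Qop (X:=borel X) inv act psi lam f x}) :
  let S := [set f | U f /\ exists2 f' : borel X -> 'cV[R]_k,
              vmeasurable f' /\ equivariant act psi f' &
              {ae mu, forall x, f x = f' x}] in
  let A := [set f | U f /\ {ae mu, forall x, Qop (X:=borel X) inv act psi lam f x = 0}] in
  [/\ (forall s a, S s -> A a -> L2inner mu ip s a = 0%E),
      (forall f, S f -> A f -> {ae mu, forall x, f x = 0})
    & (forall f, U f -> exists s a, [/\ S s, A a &
         {ae mu, forall x, f x = s x + a x}])].
Proof.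
move=> S A.
have O := @orth R G mul inv one HG lam X act Hact_meas k ip Hip psi Hpsi_meas Hpsi1 HpsiM Hpsi_unit mu Hmu.
have D := decomp HG Hlam Hact_meas Hact1 HactM Hip Hpsi_meas Hpsi1 HpsiM Hpsi_unit Hmu.
have FM := fprime_meas HG lam Hact_meas Hip Hpsi_meas Hpsi_unit Hmu.
have FE := fprime_equi HG Hlam Hact_meas Hact1 HactM Hip Hpsi_meas HpsiM Hpsi_unit.
case: HU => HUL2 HUae HU0 HUadd HUscal.
split.
- move=> s a [Us [s' [ms' es'] ss']] [Ua Qa].
  exact: (O _ _ _ (HUL2 _ Us) ms' es' ss' (HUL2 _ Ua) Qa).
- move=> f [Uf [f' [mf' ef'] ff']] [_ Qf].
  apply: (ae_zero Hip (HUL2 _ Uf)).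
  exact: (O _ _ _ (HUL2 _ Uf) mf' ef' ff' (HUL2 _ Uf) Qf).
- move=> f Uf; have [h Uh hQ] := HQU f Uf.
  have hfL := HUL2 _ Uf; have hhL := HUL2 _ Uh.
  have [hf' Qa] := D f h hfL hhL hQ.
  exists h, (fun x => f x + (-1) *: h x); split.
  + split => //; exists (fprime inv lam act ip psi f) => //; split.
      exact: FM.
    exact: FE hfL.1.
  + split => //; apply: HUadd => //; exact: HUscal.
  + apply: aeW => x.
    by rewrite scaleN1r addrCA subrr addr0.
Qed.
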